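(* Let $n=1$, $r\in\{-1,+1\}$ and $\Phi(x,y)=r\phi(x-y)$. Let $f:\mathbb R\to\mathbb R$, $f(x)=\max_{i\in I}\Phi(x,y_i)-\beta_i$ for a finite nonempty index set $I$ and $y_i,\beta_i\in\mathbb R$. Then $f$ is a-strongly convex if $r=+1$, and a-weakly convex if $r=-1$.
   Context: Standing assumption (here with $n=1$): $\phi:\mathbb R\to\mathbb R$ is convex, finite-valued, differentiable and strictly convex, super-coercive; $\phi^*$ has the same properties and $(\phi^* )'=(\phi')^{-1}$. $\partial f$ is the limiting subdifferential. A proper lsc $f$ is a-weakly convex if for every $(\bar x,\bar v)\in\operatorname{graph}\partial f$, $f(x)\ge f(\bar x)-\phi(x-\bar x+(\phi^* )'(-\bar v))+\phi((\phi^* )'(-\bar v))$ for all $x$; a-strongly convex if $f(x)\ge f(\bar x)+\phi(x-\bar x+(\phi^* )'(\bar v))-\phi((\phi^* )'(\bar v))$ for all $x$. *)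

(* Defs.v *)
From Stdlib Require Import Reals.
From Coquelicot Require Import Coquelicot.
Open Scope R_scope.

Definition convex_fun (g : R -> R) : Prop :=
  forall x y t, 0 <= t <= 1 -> g (t * x + (1 - t) * y) <= t * g x + (1 - t) * g y.

Definition strictly_convex_fun (g : R -> R) : Prop :=
  forall x y t, x <> y -> 0 < t < 1 -> g (t * x + (1 - t) * y) < t * g x + (1 - t) * g y.

Definition differentiable_fun (g : R -> R) : Prop := forall x, ex_derive g x.

Definition super_coercive (g : R -> R) : Prop :=
  is_lim (fun x => g x / Rabs x) p_infty p_infty /\
  is_lim (fun x => g x / Rabs x) m_infty p_infty.

Definition conjR (g : R -> R) (y : R) : Rbar :=
  Lub_Rbar (fun z => exists x, z = x * y - g x).

(* the real-valued conjugate (meaningful when conjR g y is finite) *)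
Definition phistar (g : R -> R) (y : R) : R := real (conjR g y).

Definition standing_assumption (phi : R -> R) : Prop :=
  convex_fun phi /\ differentiable_fun phi /\ strictly_convex_fun phi /\ super_coercive phi /\
  (forall y, is_finite (conjR phi y)) /\
  convex_fun (phistar phi) /\ differentiable_fun (phistar phi) /\
  strictly_convex_fun (phistar phi) /\ super_coercive (phistar phi) /\
  (forall x, Derive (phistar phi) (Derive phi x) = x) /\
  (forall y, Derive phi (Derive (phistar phi) y) = y).

(* Frechet (regular) subdifferential:
   v in dhat f(x)  iff  liminf_{z -> x, z <> x} (f z - f x - v (z - x)) / |z - x| >= 0,
   written out in epsilon-delta form. *)
Definition frechet_subdiff (f : R -> R) (x v : R) : Prop :=
  forall eps : R, 0 < eps -> exists delta : R, 0 < delta /\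
    forall z, Rabs (z - x) < delta -> f z >= f x + v * (z - x) - eps * Rabs (z - x).

Definition limiting_subdiff (f : R -> R) (x v : R) : Prop :=
  exists (xs vs : nat -> R),
    is_lim_seq xs x /\ is_lim_seq (fun k => f (xs k)) (f x) /\
    (forall k, frechet_subdiff f (xs k) (vs k)) /\ is_lim_seq vs v.

Definition a_weakly_convex (phi f : R -> R) : Prop :=
  forall xb vb, limiting_subdiff f xb vb ->
    forall x, f x >= f xb - phi (x - xb + Derive (phistar phi) (- vb))
                       + phi (Derive (phistar phi) (- vb)).

Definition a_strongly_convex (phi f : R -> R) : Prop :=
  forall xb vb, limiting_subdiff f xb vb ->
    forall x, f x >= f xb + phi (x - xb + Derive (phistar phi) vb)
                       - phi (Derive (phistar phi) vb).

(* maximum of g 0, ..., g N  (finite nonempty index set {0,...,N}) *)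
Fixpoint max_upto (N : nat) (g : nat -> R) : R :=
  match N with
  | O => g O
  | S k => Rmax (max_upto k g) (g (S k))
  end.

(* Main.v *)
Require Import Defs.
From Stdlib Require Import Reals Lra Lia Classical.
From Coquelicot Require Import Coquelicot.
Open Scope R_scope.

Lemma deriv_eps g x d : derivable_pt_lim g x d ->
  forall eps, 0 < eps -> exists delta, 0 < delta /\
   forall h, Rabs h < delta -> Rabs (g (x+h) - g x - d*h) <= eps * Rabs h.
Proof.
  intros H eps Heps. destruct (H eps Heps) as [[del Hd] Hh].
  exists del; split; [exact Hd|]. intros h Hlt.
  destruct (Req_dec h 0) as [->|Hn].
  - rewrite Rplus_0_r, Rabs_R0. replace (g x - g x - d*0) with 0 by ring. rewrite Rabs_R0; lra.
  - specialize (Hh h Hn Hlt).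
    replace (g (x+h) - g x - d*h) with (((g (x+h) - g x)/h - d) * h) by (field; auto).
    rewrite Rabs_mult. apply Rmult_le_compat_r; [apply Rabs_pos|lra].
Qed.

Definition Qs (s x0 a v : R) (F : R -> R) := exists w del, s*w < s*v /\ 0 < del /\
  forall h, 0 < s*h < del -> F (x0 + h) <= a + w*h.

Lemma Qs_max s x0 a v F G : (s = 1 \/ s = -1) -> Qs s x0 a v F -> Qs s x0 a v G ->
  Qs s x0 a v (fun z => Rmax (F z) (G z)).
Proof.
  intros Hs [w1 [d1 [H1 [P1 Q1]]]] [w2 [d2 [H2 [P2 Q2]]]].
  destruct Hs as [->| ->].
  - exists (Rmax w1 w2), (Rmin d1 d2). split; [assert (Rmax w1 w2 < v) by (apply Rmax_lub_lt; lra); lra|].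
    split; [apply Rmin_glb_lt; lra|]. intros h Hh.
    assert (Hm1 := Rmin_l d1 d2). assert (Hm2 := Rmin_r d1 d2).
    assert (A1 := Q1 h ltac:(lra)). assert (A2 := Q2 h ltac:(lra)).
    assert (w1 * h <= Rmax w1 w2 * h) by (apply Rmult_le_compat_r; [lra|apply Rmax_l]).
    assert (w2 * h <= Rmax w1 w2 * h) by (apply Rmult_le_compat_r; [lra|apply Rmax_r]).
    apply Rmax_lub; lra.
  - exists (Rmin w1 w2), (Rmin d1 d2). split; [assert (v < Rmin w1 w2) by (apply Rmin_glb_lt; lra); lra|].
    split; [apply Rmin_glb_lt; lra|]. intros h Hh.
    assert (Hm1 := Rmin_l d1 d2). assert (Hm2 := Rmin_r d1 d2).
    assert (A1 := Q1 h ltac:(lra)). assert (A2 := Q2 h ltac:(lra)).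
    assert (w1 * (-h) >= Rmin w1 w2 * (-h)) by (apply Rle_ge, Rmult_le_compat_r; [lra|apply Rmin_l]).
    assert (w2 * (-h) >= Rmin w1 w2 * (-h)) by (apply Rle_ge, Rmult_le_compat_r; [lra|apply Rmin_r]).
    apply Rmax_lub; lra.
Qed.

Lemma Qs_base s x0 a v g d : (s = 1 \/ s = -1) -> derivable_pt_lim g x0 d -> g x0 <= a ->
  (g x0 < a \/ s*d < s*v) -> Qs s x0 a v g.
Proof.
  intros Hs Hd Ha [Hlt|Hsd].
  - destruct (deriv_eps _ _ _ Hd 1 Rlt_0_1) as [d1 [Hd1 Hb]].
    set (w := v - s).
    set (K := Rabs d + Rabs w + 1).
    assert (HK : 0 < K) by (unfold K; pose proof (Rabs_pos d); pose proof (Rabs_pos w); lra).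
    exists w, (Rmin d1 ((a - g x0)/K)). split.
    { unfold w; destruct Hs as [->| ->]; lra. }
    split. { apply Rmin_glb_lt; [lra|]. apply Rdiv_lt_0_compat; lra. }
    intros h Hh.
    assert (Hah : Rabs h < Rmin d1 ((a - g x0)/K)).
    { destruct Hs as [->| ->]; [rewrite Rabs_pos_eq|rewrite Rabs_left]; lra. }
    assert (Hm1 := Rmin_l d1 ((a - g x0)/K)). assert (Hm2 := Rmin_r d1 ((a - g x0)/K)).
    specialize (Hb h ltac:(lra)).
    assert (HhK : Rabs h * K < a - g x0).
    { assert (Rabs h < (a - g x0)/K) by lra.
      apply (Rmult_lt_compat_r K) in H; [|lra]. unfold Rdiv in H.
      rewrite Rmult_assoc, Rinv_l in H; lra. }
    assert (E1 : d*h <= Rabs d * Rabs h) by (rewrite <- Rabs_mult; apply Rle_abs).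
    assert (E2 : - (w*h) <= Rabs w * Rabs h) by (rewrite <- Rabs_mult, <- Rabs_Ropp; apply Rle_abs).
    assert (E3 := Rle_abs (g (x0 + h) - g x0 - d * h)).
    unfold K in HhK. lra.
  - set (eps := s*(v-d)/2).
    assert (He : 0 < eps) by (unfold eps; destruct Hs as [->| ->]; lra).
    destruct (deriv_eps _ _ _ Hd eps He) as [d1 [Hd1 Hb]].
    exists ((d+v)/2), d1. split. { destruct Hs as [->| ->]; lra. }
    split; [lra|]. intros h Hh.
    assert (Hah : Rabs h = s*h).
    { destruct Hs as [->| ->]; [rewrite Rabs_pos_eq|rewrite Rabs_left]; lra. }
    specialize (Hb h ltac:(destruct Hs as [->| ->]; lra)).
    rewrite Hah in Hb.
    assert (E3 := Rle_abs (g (x0 + h) - g x0 - d * h)).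
    assert (eps * (s*h) = (v-d)/2*h).
    { unfold eps. destruct Hs as [->| ->]; field. }
    lra.
Qed.

Lemma max_upto_ge N g i : (i <= N)%nat -> g i <= max_upto N g.
Proof.
  induction N as [|N IH]; intros Hi; simpl.
  - replace i with 0%nat by lia. lra.
  - destruct (Nat.eq_dec i (S N)) as [->|Hn]; [apply Rmax_r|].
    eapply Rle_trans; [apply IH; lia|apply Rmax_l].
Qed.

Lemma Qs_maxupto s x0 a v (G : nat -> R -> R) d : (s = 1 \/ s = -1) -> forall N,
  (forall i, (i <= N)%nat -> derivable_pt_lim (G i) x0 (d i) /\ G i x0 <= a /\ (G i x0 < a \/ s*d i < s*v)) ->
  Qs s x0 a v (fun z => max_upto N (fun i => G i z)).
Proof.
  intros Hs N. induction N as [|N IH]; intros H; simpl.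
  - destruct (H 0%nat (le_n _)) as [A [B C]]. exact (Qs_base _ _ _ _ _ _ Hs A B C).
  - apply (Qs_max _ _ _ _ _ _ Hs).
    + apply IH. intros i Hi; apply H; lia.
    + destruct (H (S N) (le_n _)) as [A [B C]]. exact (Qs_base _ _ _ _ _ _ Hs A B C).
Qed.

Lemma frechet_active s N (G : nat -> R -> R) d x0 v : (s = 1 \/ s = -1) ->
  (forall i, derivable_pt_lim (G i) x0 (d i)) ->
  frechet_subdiff (fun z => max_upto N (fun i => G i z)) x0 v ->
  exists i, (i <= N)%nat /\ G i x0 = max_upto N (fun i => G i x0) /\ s*v <= s*d i.
Proof.
  intros Hs Hd Hf.
  set (a := max_upto N (fun i => G i x0)).
  destruct (classic (exists i, (i <= N)%nat /\ G i x0 = a /\ s*v <= s*d i)) as [E|NE]; [exact E|].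
  exfalso.
  assert (HQ : Qs s x0 a v (fun z => max_upto N (fun i => G i z))).
  { apply (Qs_maxupto _ _ _ _ _ d Hs). intros i Hi.
    assert (Hle : G i x0 <= a) by (apply (max_upto_ge N (fun i => G i x0)); exact Hi).
    split; [apply Hd|]. split; [exact Hle|].
    destruct (Rle_lt_or_eq_dec _ _ Hle) as [L|L]; [left; exact L|right].
    destruct (Rlt_le_dec (s * d i) (s * v)) as [L2|L2]; [exact L2|].
    exfalso; apply NE; exists i; auto. }
  destruct HQ as [w [del [Hw [Hdel Hq]]]].
  set (eps := s*(v-w)/2).
  assert (He : 0 < eps) by (unfold eps; destruct Hs as [->| ->]; lra).
  destruct (Hf eps He) as [d2 [Hd2 Hz]].
  set (m := Rmin del d2 / 2).
  assert (Hm1 := Rmin_l del d2). assert (Hm2 := Rmin_r del d2).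
  assert (Hmp : 0 < m) by (unfold m; assert (0 < Rmin del d2) by (apply Rmin_glb_lt; lra); lra).
  set (h := s * m).
  assert (Hsh : s*h = m) by (unfold h; destruct Hs as [->| ->]; ring).
  assert (Hah : Rabs h = m) by (unfold h; destruct Hs as [->| ->]; [rewrite Rabs_pos_eq|rewrite Rabs_left]; lra).
  specialize (Hq h ltac:(unfold m in *; lra)).
  specialize (Hz (x0 + h) ltac:(replace (x0 + h - x0) with h by ring; unfold m in *; lra)).
  replace (x0 + h - x0) with h in Hz by ring. rewrite Hah in Hz. fold a in Hz.
  assert (eps * m = (v - w)/2 * h) by (unfold eps, h; destruct Hs as [->| ->]; field).
  assert ((v - w) * h > 0) by (unfold h; destruct Hs as [->| ->]; nra).
  lra.
Qed.

Lemma conv_mono phi : convex_fun phi -> forall u u' s, u <= u' -> 0 <= s ->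
  phi (s+u) - phi u <= phi (s+u') - phi u'.
Proof.
  intros Hc u u' s Hu Hs.
  set (L := s + u' - u).
  destruct (Rle_lt_or_eq_dec 0 L ltac:(unfold L; lra)) as [HL|HL].
  - set (l := (u'-u)/L).
    assert (Hl0 : 0 <= l) by (unfold l; apply Rmult_le_pos; [lra|left; apply Rinv_0_lt_compat; lra]).
    assert (Hl1 : l <= 1).
    { unfold l. apply (Rmult_le_reg_r L); [lra|]. unfold Rdiv. rewrite Rmult_assoc, Rinv_l; unfold L in *; lra. }
    assert (H1 := Hc u (s+u') l ltac:(lra)).
    assert (H2 := Hc u (s+u') (1-l) ltac:(lra)).
    replace (l * u + (1 - l) * (s + u')) with (s+u) in H1 by (unfold l, L in *; field; lra).
    replace ((1-l) * u + (1 - (1-l)) * (s + u')) with u' in H2 by (unfold l, L in *; field; lra).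
    assert (l * phi u + (1 - l) * phi (s + u') + ((1-l) * phi u + (1 - (1-l)) * phi (s + u'))
            = phi u + phi (s+u')) by ring.
    lra.
  - assert (s = 0) by (unfold L in *; lra). assert (u = u') by (unfold L in *; lra). subst. lra.
Qed.

Lemma conv_mono' phi : convex_fun phi -> forall u u' s, u <= u' -> s <= 0 ->
  phi (s+u') - phi u' <= phi (s+u) - phi u.
Proof.
  intros Hc u u' s Hu Hs.
  assert (H := conv_mono phi Hc (s+u) (s+u') (-s) ltac:(lra) ltac:(lra)).
  replace (-s + (s+u)) with u in H by ring. replace (-s + (s+u')) with u' in H by ring. lra.
Qed.

Lemma slope_right phi a b D : convex_fun phi -> derivable_pt_lim phi a D -> a < b ->
  D * (b - a) <= phi b - phi a.
Proof.
  intros Hc Hd Hab.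
  set (c := b - a). set (S := (phi b - phi a)/c).
  assert (HS : phi b - phi a = S * c) by (unfold S, c; field; lra).
  rewrite HS. apply Rmult_le_compat_r; [unfold c; lra|].
  destruct (Rle_lt_dec D S) as [L|L]; [exact L|exfalso].
  destruct (Hd (D - S) ltac:(lra)) as [[del Hdel] Hq]; simpl in Hq.
  assert (Hm1 := Rmin_l (del/2) (c/2)). assert (Hm2 := Rmin_r (del/2) (c/2)).
  set (h := Rmin (del/2) (c/2)) in *.
  assert (Hh : 0 < h) by (apply Rmin_glb_lt; unfold c; lra).
  specialize (Hq h ltac:(lra) ltac:(rewrite Rabs_pos_eq; lra)).
  set (q := (phi (a + h) - phi a) / h) in Hq.
  assert (Hqh : phi (a+h) - phi a = q * h) by (unfold q; field; lra).
  assert (H1 := Hc b a (h/c) ltac:(split; [apply Rmult_le_pos; [lra|left; apply Rinv_0_lt_compat; unfold c; lra]|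
     apply (Rmult_le_reg_r c); [unfold c; lra|]; unfold Rdiv; rewrite Rmult_assoc, Rinv_l; [|unfold c; lra]; lra])).
  replace (h / c * b + (1 - h / c) * a) with (a + h) in H1 by (unfold c in *; field; lra).
  assert (h / c * phi b + (1 - h / c) * phi a = phi a + h * S) by (replace (phi b) with (phi a + S*c) by lra; unfold c in *; field; lra).
  assert (q * h <= S * h) by lra.
  apply Rmult_le_reg_r in H0; [|lra].
  assert (Hr := Rle_abs (q - D)). rewrite Rabs_minus_sym in Hq. assert (Hr2 := Rle_abs (D - q)). lra.
Qed.

Lemma slope_left phi a b D : convex_fun phi -> derivable_pt_lim phi b D -> a < b ->
  phi b - phi a <= D * (b - a).
Proof.
  intros Hc Hd Hab.
  set (c := b - a). set (S := (phi b - phi a)/c).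
  assert (HS : phi b - phi a = S * c) by (unfold S, c; field; lra).
  rewrite HS. apply Rmult_le_compat_r; [unfold c; lra|].
  destruct (Rle_lt_dec S D) as [L|L]; [exact L|exfalso].
  destruct (Hd (S - D) ltac:(lra)) as [[del Hdel] Hq]; simpl in Hq.
  assert (Hm1 := Rmin_l (del/2) (c/2)). assert (Hm2 := Rmin_r (del/2) (c/2)).
  set (k := Rmin (del/2) (c/2)) in *.
  assert (Hk : 0 < k) by (apply Rmin_glb_lt; unfold c; lra).
  specialize (Hq (-k) ltac:(lra) ltac:(rewrite Rabs_Ropp, Rabs_pos_eq; lra)).
  set (q := (phi (b + - k) - phi b) / - k) in Hq.
  assert (Hqh : phi (b + - k) - phi b = q * (-k)) by (unfold q; field; lra).
  assert (H1 := Hc a b (k/c) ltac:(split; [apply Rmult_le_pos; [lra|left; apply Rinv_0_lt_compat; unfold c; lra]|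
     apply (Rmult_le_reg_r c); [unfold c; lra|]; unfold Rdiv; rewrite Rmult_assoc, Rinv_l; [|unfold c; lra]; lra])).
  replace (k / c * a + (1 - k / c) * b) with (b + - k) in H1 by (unfold c in *; field; lra).
  assert (k / c * phi a + (1 - k / c) * phi b = phi b - k * S) by (replace (phi a) with (phi b - S*c) by lra; unfold c in *; field; lra).
  assert (S * k <= q * k) by lra.
  apply Rmult_le_reg_r in H0; [|lra].
  assert (Hr := Rle_abs (q - D)). lra.
Qed.

Lemma deriv_strict phi : convex_fun phi -> strictly_convex_fun phi -> differentiable_fun phi ->
  forall a b, a < b -> Derive phi a < Derive phi b.
Proof.
  intros Hc Hs Hd a b Hab.
  assert (Da : derivable_pt_lim phi a (Derive phi a)) by (apply is_derive_Reals, Derive_correct, Hd).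
  assert (Db : derivable_pt_lim phi b (Derive phi b)) by (apply is_derive_Reals, Derive_correct, Hd).
  set (m := (a+b)/2).
  assert (H1 := slope_right phi a m _ Hc Da ltac:(unfold m; lra)).
  assert (H2 := slope_left phi m b _ Hc Db ltac:(unfold m; lra)).
  assert (H3 := Hs a b (1/2) ltac:(lra) ltac:(lra)).
  replace (1 / 2 * a + (1 - 1 / 2) * b) with m in H3 by (unfold m; field).
  assert (Hma : m - a = b - m) by (unfold m; field). rewrite <- Hma in H2.
  assert (Derive phi a * (m - a) < Derive phi b * (m - a)) by lra.
  apply Rmult_lt_reg_r in H; [exact H|unfold m; lra].
Qed.

Lemma P_cont (D P : R -> R) : (forall a b, a < b -> D a < D b) -> (forall u, D (P u) = u) ->
  forall (vs : nat -> R) (v : R), is_lim_seq vs v -> is_lim_seq (fun k => P (vs k)) (P v).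
Proof.
  intros Hm HDP vs v Hv0. assert (Hv : Un_cv vs v) by (apply is_lim_seq_Reals; exact Hv0). apply (is_lim_seq_Reals (fun k => P (vs k)) (P v)).
  intros eps Heps. set (t := P v).
  assert (H1 : D (t - eps) < v) by (rewrite <- (HDP v); apply Hm; unfold t; lra).
  assert (H2 : v < D (t + eps)) by (rewrite <- (HDP v) at 1; apply Hm; unfold t; lra).
  set (eta := Rmin (v - D (t - eps)) (D (t+eps) - v)).
  assert (He : 0 < eta) by (apply Rmin_glb_lt; lra).
  destruct (Hv eta He) as [N HN]. exists N. intros n Hn.
  specialize (HN n Hn). unfold R_dist in *.
  assert (Hm1 := Rmin_l (v - D (t - eps)) (D (t+eps) - v)).
  assert (Hm2 := Rmin_r (v - D (t - eps)) (D (t+eps) - v)).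
  fold eta in Hm1, Hm2.
  assert (A := Rle_abs (vs n - v)). assert (B := Rle_abs (-(vs n - v))). rewrite Rabs_Ropp in B.
  assert (HD := HDP (vs n)).
  apply Rabs_def1.
  - destruct (Rlt_le_dec (P (vs n) - t) eps) as [L|L]; [exact L|exfalso].
    destruct (Rle_lt_or_eq_dec _ _ L) as [L2|L2].
    + assert (D (t+eps) < D (P (vs n))) by (apply Hm; lra). lra.
    + replace (P (vs n)) with (t + eps) in HD by lra. lra.
  - destruct (Rlt_le_dec (- eps) (P (vs n) - t)) as [L|L]; [exact L|exfalso].
    destruct (Rle_lt_or_eq_dec _ _ L) as [L2|L2].
    + assert (D (P (vs n)) < D (t - eps)) by (apply Hm; lra). lra.
    + replace (P (vs n)) with (t - eps) in HD by lra. lra.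
Qed.

Lemma G_deriv phi r yi bi x0 : (r = 1 \/ r = -1) -> ex_derive phi (x0 - yi) ->
  derivable_pt_lim (fun z => r * phi (z - yi) - bi) x0 (r * Derive phi (x0 - yi)).
Proof.
  intros Hr Hd. assert (H : derivable_pt_lim phi (x0 - yi) (Derive phi (x0 - yi)))
    by (apply is_derive_Reals, Derive_correct, Hd).
  intros eps Heps. destruct (H eps Heps) as [del Hdel]. exists del. intros h Hh Hlt.
  specialize (Hdel h Hh Hlt).
  replace ((r * phi (x0 + h - yi) - bi - (r * phi (x0 - yi) - bi)) / h - r * Derive phi (x0 - yi))
    with (r * ((phi (x0 - yi + h) - phi (x0 - yi)) / h - Derive phi (x0 - yi)))
    by (replace (x0 + h - yi) with (x0 - yi + h) by ring; field; auto).
  rewrite Rabs_mult. destruct Hr as [->| ->]; [rewrite Rabs_R1|rewrite Rabs_m1]; lra.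
Qed.

Lemma D_le_inv (D : R -> R) : (forall a b, a < b -> D a < D b) -> forall a b, D a <= D b -> a <= b.
Proof. intros Hm a b H. destruct (Rle_lt_dec a b) as [L|L]; [exact L|]. apply Hm in L. lra. Qed.

Lemma frechet_ineq phi r N (y beta : nat -> R) x0 v : standing_assumption phi -> (r = 1 \/ r = -1) ->
  frechet_subdiff (fun z => max_upto N (fun i => r * phi (z - y i) - beta i)) x0 v ->
  forall x, max_upto N (fun i => r * phi (x - y i) - beta i) >=
    max_upto N (fun i => r * phi (x0 - y i) - beta i) +
    r * (phi (x - x0 + Derive (phistar phi) (r*v)) - phi (Derive (phistar phi) (r*v))).
Proof.
  intros HA Hr Hf x.
  destruct HA as [Hc [Hd [Hs [_ [_ [_ [_ [_ [_ [_ HDP]]]]]]]]]].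
  assert (Hm := deriv_strict phi Hc Hs Hd).
  assert (Hinv := D_le_inv _ Hm).
  set (t := Derive (phistar phi) (r*v)).
  assert (HDt : Derive phi t = r * v) by apply HDP.
  set (s := x - x0).
  assert (Hsig : exists sg, (sg = 1 \/ sg = -1) /\ (sg = 1 -> 0 <= s) /\ (sg = -1 -> s <= 0)).
  { destruct (Rle_lt_dec 0 s); [exists 1|exists (-1)]; repeat split; intros; lra. }
  destruct Hsig as [sg [Hsg [Hs1 Hs2]]].
  destruct (frechet_active sg N (fun i z => r * phi (z - y i) - beta i)
     (fun i => r * Derive phi (x0 - y i)) x0 v Hsg
     (fun i => G_deriv phi r (y i) (beta i) x0 Hr (Hd _)) Hf) as [i [Hi [Hact Hsv]]].
  simpl in Hact, Hsv.
  assert (Hge := max_upto_ge N (fun i => r * phi (x - y i) - beta i) i Hi). simpl in Hge.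
  rewrite <- Hact.
  set (ti := x0 - y i) in *.
  replace (x - y i) with (s + ti) in Hge by (unfold s, ti; ring).
  replace (x - x0 + t) with (s + t) by (unfold s; ring).
  assert (Key : r * (phi (s + t) - phi t) <= r * (phi (s + ti) - phi ti)).
  { destruct Hr as [-> | ->]; destruct Hsg as [-> | ->].
    - assert (t <= ti) by (apply Hinv; lra).
      assert (H2 := conv_mono phi Hc t ti s H ltac:(auto)). lra.
    - assert (ti <= t) by (apply Hinv; lra).
      assert (H2 := conv_mono' phi Hc ti t s H ltac:(auto)). lra.
    - assert (ti <= t) by (apply Hinv; lra).
      assert (H2 := conv_mono phi Hc ti t s H ltac:(auto)). lra.
    - assert (t <= ti) by (apply Hinv; lra).
      assert (H2 := conv_mono' phi Hc t ti s H ltac:(auto)). lra. }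
  lra.
Qed.

Lemma limit_ineq phi r N (y beta : nat -> R) xb vb : standing_assumption phi -> (r = 1 \/ r = -1) ->
  limiting_subdiff (fun z => max_upto N (fun i => r * phi (z - y i) - beta i)) xb vb ->
  forall x, max_upto N (fun i => r * phi (x - y i) - beta i) >=
    max_upto N (fun i => r * phi (xb - y i) - beta i) +
    r * (phi (x - xb + Derive (phistar phi) (r*vb)) - phi (Derive (phistar phi) (r*vb))).
Proof.
  intros HA Hr [xs [vs [Hx [Hfx [Hfr Hvs]]]]] x.
  assert (HA' := HA).
  destruct HA' as [Hc [Hd [Hs [_ [_ [_ [_ [_ [_ [_ HDP]]]]]]]]]].
  assert (Hm := deriv_strict phi Hc Hs Hd).
  set (P := Derive (phistar phi)).
  assert (HT : is_lim_seq (fun k => P (r * vs k)) (P (r * vb))).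
  { apply (P_cont (Derive phi) P Hm HDP (fun k => r * vs k)).
    apply (is_lim_seq_mult' (fun _ => r) vs r vb); [apply is_lim_seq_const|exact Hvs]. }
  assert (Hcont : forall c, continuity_pt phi c).
  { intro c. apply continuity_pt_filterlim. exact (@ex_derive_continuous R_AbsRing R_NormedModule phi c (Hd c)). }
  set (F := fun z => max_upto N (fun i => r * phi (z - y i) - beta i)).
  assert (HL : is_lim_seq (fun k => F (xs k) + r * (phi (x - xs k + P (r * vs k)) - phi (P (r * vs k))))
                 (F xb + r * (phi (x - xb + P (r*vb)) - phi (P (r*vb))))).
  { apply is_lim_seq_plus'; [exact Hfx|].
    apply (is_lim_seq_mult' (fun _ => r)); [apply is_lim_seq_const|].
    apply is_lim_seq_minus'.
    - apply (is_lim_seq_continuous phi (fun k => x - xs k + P (r * vs k))); [apply Hcont|].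
      apply is_lim_seq_plus'; [|exact HT].
      apply is_lim_seq_minus'; [apply is_lim_seq_const|exact Hx].
    - apply (is_lim_seq_continuous phi (fun k => P (r * vs k))); [apply Hcont|exact HT]. }
  assert (Hle := is_lim_seq_le _ (fun _ => F x) _ _
     (fun k => Rge_le _ _ (frechet_ineq phi r N y beta (xs k) (vs k) HA Hr (Hfr k) x)) HL (is_lim_seq_const _)).
  simpl in Hle. unfold F in Hle. apply Rle_ge. exact Hle.
Qed.

Theorem mainTheorem16 (phi : R -> R) (Hphi : standing_assumption phi)
  (r : R) (Hr : r = 1 \/ r = -1)
  (N : nat) (y beta : nat -> R) :
  let f := fun x => max_upto N (fun i => r * phi (x - y i) - beta i) in
  (r = 1 -> a_strongly_convex phi f) /\ (r = -1 -> a_weakly_convex phi f).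
Proof.
  intros f. split; intros Hr1.
  - intros xb vb Hl x. assert (H := limit_ineq phi r N y beta xb vb Hphi Hr Hl x).
    unfold f; cbv beta. subst r. rewrite (Rmult_1_l vb) in H. lra.
  - intros xb vb Hl x. assert (H := limit_ineq phi r N y beta xb vb Hphi Hr Hl x).
    unfold f; cbv beta. subst r. replace (-1 * vb) with (- vb) in H by ring. lra.
Qed.
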